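(* Fix $\theta^* \in \mathbb{R}^n$ and let $\mathcal{T} \subseteq \mathbb{R}^n$ be a nonempty closed convex set such that the re-centered set $\{\theta - \Pi_{\mathcal{T}}(\theta^* ) : \theta \in \mathcal{T}\}$ is a polyhedral cone. Then there exists $r > 0$ such that $$\Pi_{\mathcal{T}}(u) - \Pi_{\mathcal{T}}(\theta^* ) \in (\theta^* - \Pi_{\mathcal{T}}(\theta^* ))^\perp \quad \text{for all } u \in B_r(\theta^* ).$$
   Context: $\Pi_{\mathcal{T}}$ is Euclidean projection onto $\mathcal{T}$; $B_r(x)$ is the closed Euclidean ball of radius $r$ about $x$; $v^\perp = \{w : \langle w, v\rangle = 0\}$. A polyhedral cone is a set $\{x : Ax \le 0\}$ for some matrix $A$. *)

(* Defs.v *)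
From HB Require Import structures.
From mathcomp Require Import all_boot all_order all_algebra.
From mathcomp Require Import all_classical all_reals all_analysis.
Set Implicit Arguments. Unset Strict Implicit. Unset Printing Implicit Defensive.
Import Order.TTheory GRing.Theory Num.Theory.
Import numFieldNormedType.Exports.
Local Open Scope ring_scope.
Local Open Scope classical_set_scope.

Section Defs.
Variables (R : realType) (n : nat).

Definition dotv (u v : 'rV[R]_n) : R := \sum_(i < n) u ord0 i * v ord0 i.
Definition enorm (u : 'rV[R]_n) : R := Num.sqrt (dotv u u).

Definition eball (x : 'rV[R]_n) (r : R) : set 'rV[R]_n :=
  [set u | enorm (u - x) <= r].

Definition perp (v : 'rV[R]_n) : set 'rV[R]_n := [set w | dotv w v = 0].

Definition polyhedral_cone (C : set 'rV[R]_n) : Prop :=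
  exists (m : nat) (A : 'M[R]_(m, n)),
    C = [set x | forall i : 'I_m, (A *m x^T) i ord0 <= 0].

Definition is_proj (T : set 'rV[R]_n) (u p : 'rV[R]_n) : Prop :=
  T p /\ forall q, T q -> enorm (u - p) <= enorm (u - q).

(* Euclidean projection Pi_T(u): a chosen nearest point (unique when T is
   nonempty closed convex); default 0 if none exists. *)
Definition eproj (T : set 'rV[R]_n) (u : 'rV[R]_n) : 'rV[R]_n :=
  xget 0 [set p | is_proj T u p].

End Defs.

(* Main.v *)
Require Import Defs.
From HB Require Import structures.
From mathcomp Require Import all_boot all_order all_algebra.
From mathcomp Require Import all_classical all_reals all_analysis.
From mathcomp Require Import ring lra.
Import Order.TTheory GRing.Theory Num.Theory.
Import numFieldNormedType.Exports.
Local Open Scope ring_scope.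
Local Open Scope classical_set_scope.
Set Implicit Arguments. Unset Strict Implicit. Unset Printing Implicit Defensive.

Section Dot.
Variables (R : realType) (n : nat).
Implicit Types u v w : 'rV[R]_n.

Lemma dotvC u v : dotv u v = dotv v u.
Proof. by apply: eq_bigr => i _; rewrite mulrC. Qed.
Lemma dotvDl u v w : dotv (u + v) w = dotv u w + dotv v w.
Proof. by rewrite /dotv -big_split; apply: eq_bigr => i _; rewrite !mxE mulrDl. Qed.
Lemma dotvNl u w : dotv (- u) w = - dotv u w.
Proof. by rewrite /dotv -sumrN; apply: eq_bigr => i _; rewrite !mxE mulNr. Qed.
Lemma dotvZl (a : R) u w : dotv (a *: u) w = a * dotv u w.
Proof. by rewrite /dotv mulr_sumr; apply: eq_bigr => i _; rewrite !mxE mulrA. Qed.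
Lemma dotvBl u v w : dotv (u - v) w = dotv u w - dotv v w.
Proof. by rewrite dotvDl dotvNl. Qed.
Lemma dotvDr u v w : dotv w (u + v) = dotv w u + dotv w v.
Proof. by rewrite dotvC dotvDl !(dotvC w). Qed.
Lemma dotvNr u w : dotv w (- u) = - dotv w u.
Proof. by rewrite dotvC dotvNl dotvC. Qed.
Lemma dotvBr u v w : dotv w (u - v) = dotv w u - dotv w v.
Proof. by rewrite dotvDr dotvNr. Qed.
Lemma dotvZr (a : R) u w : dotv w (a *: u) = a * dotv w u.
Proof. by rewrite dotvC dotvZl dotvC. Qed.
Lemma dotv0l w : dotv 0 w = 0.
Proof. by rewrite /dotv big1 // => i _; rewrite mxE mul0r. Qed.
Lemma dotvv_ge0 u : 0 <= dotv u u.
Proof. by apply: sumr_ge0 => i _; rewrite -expr2 sqr_ge0. Qed.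
Lemma enorm_le u v : (enorm u <= enorm v) = (dotv u u <= dotv v v).
Proof. by rewrite /enorm ler_sqrt // dotvv_ge0. Qed.


Lemma sum_cont (F : 'I_n -> 'rV[R]_n -> R) :
  (forall i, continuous (F i)) -> continuous (fun q => \sum_i F i q).
Proof.
move=> Fc; rewrite /index_enum; elim: (Finite.enum _) => [|j s IH].
  under eq_fun do rewrite big_nil; exact: cst_continuous.
under eq_fun do rewrite big_cons.
by move=> x; apply: continuousD; [exact: Fc | exact: IH].
Qed.

Lemma term_le (F : 'I_n -> R) j : (forall i, 0 <= F i) -> F j <= \sum_i F i.
Proof.
move=> F0; rewrite (bigD1 j) //= lerDl; exact: sumr_ge0.
Qed.

Lemma proj_exists (T : set 'rV[R]_n) u :
  T !=set0 -> closed T -> exists p, is_proj T u p.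
Proof.
case=> t0 Tt0 Tcl.
pose f q := dotv (u - q) (u - q).
have fc : continuous f.
  apply: sum_cont => i.
  have ci : continuous (fun q : 'rV[R]_n => (u - q) ord0 i).
    under eq_fun do rewrite !mxE.
    by move=> x; apply: continuousB; [exact: cst_continuous | exact: coord_continuous].
  by move=> x; apply: continuousM; exact: ci.
pose A := T `&` f @^-1` [set x | x <= f t0].
have Acl : closed A.
  apply: closedI => //; apply: preimage_closed; last exact: closed_le.
  by move=> x _; exact: fc.
pose U := \sum_k `|u ord0 k|.
have Abd : bounded_set A.
  exists (U + 1 + f t0); split; first by rewrite num_real.
  move=> M hM q [Tq /= fq].
  rewrite [X in X <= _]/Num.Def.normr /= mx_normrE; apply: bigmax_le.
    apply: le_trans (ltW hM); rewrite addr_ge0 // ?dotvv_ge0 //.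
    by rewrite addr_ge0 // sumr_ge0.
  move=> [i j] _ /=; rewrite (ord1 i).
  apply: le_trans (ltW hM).
  have h1 : `|u ord0 j| <= U by apply: (term_le (F := fun k => `|u ord0 k|)).
  have h2 : (u - q) ord0 j * (u - q) ord0 j <= f q.
    by apply: (term_le (F := fun k => (u - q) ord0 k * (u - q) ord0 k)) => k; rewrite -expr2 sqr_ge0.
  move: h2; rewrite !mxE => h2.
  set a := u ord0 j - q ord0 j in h2.
  have -> : q ord0 j = u ord0 j - a by rewrite /a opprB addrC subrK.
  have h3 : `|a| <= 1 + a * a.
    have := sqr_ge0 (`|a| - 1); rewrite -[a * a]real_normK ?num_real // expr2.
    nra.
  apply: le_trans (ler_normB _ _) _.
  have h4 : `|u ord0 j| <= U := h1.
  lra.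
have A0 : A !=set0 by exists t0; split => //=.
have cw : {within A, continuous f} by apply: continuous_subspaceT.
have [c cA cmin] := EVT_min_rV A0 (bounded_closed_compact Abd Acl) cw.
move: cA; rewrite inE => -[Tc fc0].
exists c; split => // q Tq; rewrite enorm_le.
have [fq|fq] := leP (f q) (f t0).
  by apply: cmin; rewrite inE.
by apply: le_trans fc0 (ltW fq).
Qed.


Lemma dot_expand (z d : 'rV[R]_n) (s : R) :
  dotv (z - s *: d) (z - s *: d) = dotv z z - 2 * s * dotv z d + s ^+ 2 * dotv d d.
Proof.
rewrite !dotvBl !dotvBr !dotvZl !dotvZr (dotvC d z); ring.
Qed.

Lemma proj_vi (T : set 'rV[R]_n) u p t : is_proj T u p -> T t ->
  (forall s, 0 < s -> s <= 1 -> T (p + s *: (t - p))) ->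
  dotv (u - p) (t - p) <= 0.
Proof.
move=> [Tp pmin] Tt conv.
set z := u - p; set d := t - p.
have key s : 0 < s -> s <= 1 -> 2 * s * dotv z d <= s ^+ 2 * dotv d d.
  move=> s0 s1; have := pmin _ (conv s s0 s1).
  rewrite enorm_le (_ : u - (p + s *: d) = z - s *: d); last first.
    by rewrite /z opprD addrA.
  rewrite dot_expand; lra.
rewrite leNgt; apply/negP => X0.
have Y0 := dotvv_ge0 d.
set X := dotv z d in X0 key; set Y := dotv d d in Y0 key.
have XY0 : 0 < X + Y by lra.
have s0 : 0 < X / (X + Y) by rewrite divr_gt0.
have s1 : X / (X + Y) <= 1 by rewrite ler_pdivrMr // mul1r; lra.
have := key _ s0 s1.
set s := X / (X + Y) in s0 s1 *.
have hs : s * (X + Y) = X by rewrite /s mulfVK // gt_eqF.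
nra.
Qed.

Lemma fin_choose (I : finType) (P : I -> R -> Prop) :
  (forall j, exists2 d, 0 < d & forall e, 0 < e -> e <= d -> P j e) ->
  exists2 d, 0 < d & forall j, P j d.
Proof.
move=> H.
suff [d d0 Hd] : exists2 d, 0 < d & forall e, 0 < e -> e <= d ->
    forall j, j \in index_enum I -> P j e.
  by exists d => // j; apply: Hd => //; rewrite mem_index_enum.
elim: (index_enum I) => [|j s [d1 d10 IH]].
  by exists 1 => // e _ _ j.
have [d2 d20 H2] := H j.
exists (Num.min d1 d2); first by rewrite lt_min d10 d20.
move=> e e0; rewrite le_min => /andP[e1 e2] k; rewrite inE => /orP[/eqP->|ks].
  exact: H2.
exact: IH.
Qed.

End Dot.

Section Core.
Variables (R : realType) (n m : nat) (A : 'M[R]_(m, n)).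
Definition av (i : 'I_m) (x : 'rV[R]_n) := (A *m x^T) i ord0.
Lemma avD i x y : av i (x + y) = av i x + av i y.
Proof. by rewrite /av linearD mulmxDr mxE. Qed.
Lemma avZ i (s : R) x : av i (s *: x) = s * av i x.
Proof. by rewrite /av linearZ /= -scalemxAr mxE. Qed.
Lemma avN i x : av i (- x) = - av i x.
Proof. by rewrite -scaleN1r avZ mulN1r. Qed.
Lemma av0 i : av i 0 = 0.
Proof. by rewrite /av trmx0 mulmx0 mxE. Qed.
Definition inC x := forall i, av i x <= 0.

Definition KI (I : {set 'I_m}) c := forall i, i \in I -> av i c <= 0.
Definition Pol (I : {set 'I_m}) y := forall c, KI I c -> dotv y c <= 0.

Lemma stepA (v : 'rV[R]_n) (I : {set 'I_m}) : exists2 d, 0 < d &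
  forall e, 0 < e -> e <= d ->
  forall y, dotv (y - v) (y - v) <= e -> Pol I y -> Pol I v.
Proof.
have [hv|hv] := pselect (Pol I v).
  by exists 1 => // *.
move/existsNP: hv => [c /not_implyP [Kc /negP]]; rewrite -ltNge => g0.
set g := dotv v c in g0.
set K := dotv c c + 1.
have K0 : 0 < K by rewrite /K; have := dotvv_ge0 c; lra.
exists (g ^+ 2 / (8 * K)); first by rewrite divr_gt0 ?exprn_gt0 ?mulr_gt0.
move=> e e0 ed y hy Py; exfalso.
have := Py c Kc.
set z := y - v in hy.
have -> : y = z + v by rewrite /z subrK.
rewrite dotvDl -/g.
set P := dotv z c.
set t := 4 * K / g.
have t0 : 0 < t by rewrite divr_gt0 ?mulr_gt0.
have tg : t * g = 4 * K by rewrite /t mulfVK // gt_eqF.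
have h0 := dotvv_ge0 (t *: z + c).
rewrite !dotvDl !dotvDr !dotvZl !dotvZr (dotvC c z) -/P in h0.
set Z := dotv z z in hy h0.
have hZ : 8 * K * Z <= g ^+ 2.
  by rewrite -ler_pdivlMl ?mulr_gt0 // mulrC; apply: le_trans hy ed.
have hZ' : t ^+ 2 * Z <= 2 * K.
  have : t ^+ 2 * (8 * K * Z) <= t ^+ 2 * g ^+ 2.
    by rewrite ler_pM2l // exprn_gt0.
  rewrite -exprMn tg => h; nra.
have : 0 < t * (P + g).
  rewrite /K in hZ' tg K0.
  nra.
rewrite pmulr_rgt0 // => hPg h1; lra.
Qed.

Lemma core (v : 'rV[R]_n) : (forall c, inC c -> dotv v c <= 0) ->
  exists2 r, 0 < r & forall w x, dotv (w - v) (w - v) <= r -> inC x ->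
   (forall c, inC c -> dotv (w - x) (c - x) <= 0) -> dotv x v = 0.
Proof.
move=> hv.
have [d d0 Hd] := fin_choose (fun I => @stepA v I).
exists (d / 4); first by rewrite divr_gt0.
move=> w x hw Cx hvi.
have h1 : dotv (w - x) x = 0.
  apply/le_anti/andP; split.
    have := hvi (x + x); rewrite addrK; apply => i; rewrite avD; have := Cx i; lra.
  have := hvi 0; rewrite sub0r dotvNr oppr_le0; apply => i; rewrite av0.
  exact: lexx.
have hvx := hv _ Cx.
have [e he] : exists e, w = v + e by exists (w - v); rewrite addrC subrK.
subst w.
have hwe : v + e - v = e by rewrite addrC addKr.
rewrite hwe in hw.
have hE := dotvv_ge0 (e - x).
have hF := dotvv_ge0 (e + x).
rewrite !dotvBl !dotvDl in h1.
rewrite !dotvBl !dotvBr (dotvC x e) in hE.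
rewrite !dotvDl !dotvDr (dotvC x e) in hF.
set y := v + e - x.
have hy : dotv (y - v) (y - v) <= d.
  have -> : y - v = e - x by rewrite /y addrAC hwe.
  rewrite !dotvBl !dotvBr (dotvC x e).
  have : dotv e e <= d / 4 := hw.
  have : d / 4 * 4 = d by rewrite mulfVK.
  lra.
set I : {set 'I_m} := [set i | av i x == 0]%SET.
have PolIy : Pol I y.
  move=> c Kc.
  suff Hi : forall i, exists2 d, 0 < d & forall eps, 0 < eps -> eps <= d ->
      av i x + eps * av i c <= 0.
    have [eps eps0 Heps] := fin_choose Hi.
    have hx : forall i, av i (x + eps *: c) <= 0 by move=> i; rewrite avD avZ; exact: Heps.
    move: (hvi _ hx).
    have -> : x + eps *: c - x = eps *: c by rewrite addrC addKr.
    by rewrite dotvZr pmulr_rle0.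
  move=> i.
  have [ac|ac] := leP (av i c) 0.
    exists 1 => // e' e0 _; have := Cx i; nra.
  have ax : av i x < 0.
    rewrite lt_neqAle Cx andbT; apply/negP => /eqP hx.
    have : i \in I by rewrite inE hx.
    by move/Kc; rewrite leNgt ac.
  exists (- av i x / av i c); first by rewrite divr_gt0 ?oppr_gt0.
  move=> e' e0 e1.
  have : e' * av i c <= - av i x.
    by rewrite -ler_pdivlMr.
  lra.
have PolIv := Hd I y hy PolIy.
have K1 : KI I x by move=> i; rewrite inE => /eqP ->.
have K2 : KI I (- x) by move=> i; rewrite inE avN => /eqP ->; rewrite oppr0.
have := PolIv _ K1; have := PolIv _ K2; rewrite dotvNr dotvC; lra.
Qed.

End Core.

Theorem lemma4 (R : realType) (n : nat) (thetas : 'rV[R]_n)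
  (T : set 'rV[R]_n) :
  T !=set0 -> closed T -> convex_set T ->
  polyhedral_cone [set theta - eproj T thetas | theta in T] ->
  exists2 r : R, 0 < r &
    forall u, eball thetas r u ->
      perp (thetas - eproj T thetas) (eproj T u - eproj T thetas).
Proof.
move=> T0 Tcl _ [m [A HA]].
set p0 := eproj T thetas in HA *.
have Tchar : forall t, T t <-> inC A (t - p0).
  move=> t; split => [Tt|Ct].
    have : [set theta - p0 | theta in T] (t - p0) by exists t.
    by rewrite HA.
  have : [set x | forall i : 'I_m, (A *m x^T) i ord0 <= 0] (t - p0) := Ct.
  rewrite -HA => -[th Tth /(congr1 (fun z => z + p0))].
  by rewrite !subrK => <-.
have projP : forall u, is_proj T u (eproj T u).
  move=> u; apply: xgetPex; exact: proj_exists.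
have conv : forall p t, T p -> T t -> forall s : R, 0 < s -> s <= 1 ->
    T (p + s *: (t - p)).
  move=> p t /Tchar Cp /Tchar Ct s s0 s1; apply/Tchar => i.
  have -> : p + s *: (t - p) - p0 = (p - p0) + s *: ((t - p0) - (p - p0)).
    by rewrite opprB addrA subrK addrAC.
  have := Cp i; have := Ct i; set a := av A i (p - p0); set b := av A i (t - p0); move=> hb ha.
  have -> : av A i ((p - p0) + s *: ((t - p0) - (p - p0))) = a + s * (b - a).
    by rewrite (avD _ _ (p - p0)) avZ (avD _ _ (t - p0)) avN.
  have : s * (b - a) <= s * (0 - a) by rewrite ler_wpM2l ?(ltW s0) // lerD2r.
  have : (1 - s) * a <= 0 by rewrite mulr_ge0_le0 // subr_ge0.
  lra.
have vi : forall u t, T t -> dotv (u - eproj T u) (t - eproj T u) <= 0.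
  move=> u t Tt; have [Tq _] := projP u.
  exact: (proj_vi (projP u) Tt (fun s s0 s1 => conv _ _ Tq Tt s s0 s1)).
have hv : forall c, inC A c -> dotv (thetas - p0) c <= 0.
  move=> c Cc; have := vi thetas (c + p0).
  by rewrite addrK; apply; apply/Tchar; rewrite addrK.
have [r r0 Hr] := core hv.
exists (Num.sqrt r); first by rewrite sqrtr_gt0.
move=> u hu; rewrite /perp /=.
set q := eproj T u.
apply: (Hr (u - p0)).
- have -> : u - p0 - (thetas - p0) = u - thetas by rewrite opprB addrA subrK.
  by move: hu; rewrite /eball /= /enorm ler_sqrt // ltW.
- by apply/Tchar; case: (projP u).
- move=> c Cc.
  have -> : u - p0 - (q - p0) = u - q by rewrite opprB addrA subrK.
  have -> : c - (q - p0) = (c + p0) - q by rewrite opprB addrA.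
  by apply: vi; apply/Tchar; rewrite addrK.
Qed.
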